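(* Fix a monomial order on $S$. Let $J,E$ be ideals of $S$ and let $\mathcal G_J$ be a Gröbner basis of $J$. The following are equivalent: (a) $E$ is S-nice with respect to $\mathcal G_J$; (b) for every Gröbner basis $\mathcal G_E$ of $E$, and every $f\in\mathcal G_J$, $g\in\mathcal G_E$, one has $S(f,g)\in E$; (c) there exists a Gröbner basis $\mathcal G_E$ of $E$ such that $S(f,g)\in E$ for all $f\in\mathcal G_J$ and $g\in\mathcal G_E$.
   Context: $K$ is a field and $S=K[x_1,\ldots,x_n]$ with a fixed monomial order. For $0\neq f\in S$, $\mathrm{in}(f)$ denotes its leading monomial and $\mathrm{LT}(f)$ its leading term. For nonzero $f,g\in S$ the S-polynomial is $S(f,g)=\frac{\mathrm{lcm}(\mathrm{in}(f),\mathrm{in}(g))}{\mathrm{LT}(f)}f-\frac{\mathrm{lcm}(\mathrm{in}(f),\mathrm{in}(g))}{\mathrm{LT}(g)}g$. Given a Gröbner basis $\mathcal G_J$ of an ideal $J$, an ideal $E$ is called S-nice with respect to $\mathcal G_J$ if $S(f,g)\in E$ for all $f\in\mathcal G_J$ and all nonzero $g\in E$. *)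

(* Defs.v *)
From HB Require Import structures.
From mathcomp Require Import all_boot all_order all_algebra.
From mathcomp Require Import mpoly.
Set Implicit Arguments. Unset Strict Implicit. Unset Printing Implicit Defensive.
Import GRing.Theory.
Local Open Scope ring_scope.

Section GB.
Variables (K : fieldType) (n : nat).
Local Notation S := {mpoly K[n]}.
Local Notation mon := 'X_{1..n}.

Definition monomial_order (le : rel mon) : Prop :=
  [/\ reflexive le, antisymmetric le, transitive le, total le &
   [/\ (forall m1 m2 m : mon, le m1 m2 -> le (m1 + m)%MM (m2 + m)%MM) &
      well_founded (fun a b : mon => le a b && (a != b))]].

Definition mon_max (le : rel mon) (m acc : mon) : mon := if le acc m then m else acc.

(* in(f): the largest monomial in the support of f (meaningful for f != 0). *)
Definition lm (le : rel mon) (f : S) : mon :=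
  let s := msupp f in foldr (mon_max le) (head 0%MM s) (behead s).

Definition lc (le : rel mon) (f : S) : K := f@_(lm le f).
Definition LT (le : rel mon) (f : S) : S := lc le f *: 'X_[lm le f].

Definition spoly (le : rel mon) (f g : S) : S :=
  let L := mlcm (lm le f) (lm le g) in
  ((lc le f)^-1 *: 'X_[(L - lm le f)%MM]) * f
  - ((lc le g)^-1 *: 'X_[(L - lm le g)%MM]) * g.

Definition is_ideal (I : S -> Prop) : Prop :=
  [/\ I 0, (forall a b, I a -> I b -> I (a + b)) & (forall r a, I a -> I (r * a))].

Definition ideal_gen (A : S -> Prop) : S -> Prop :=
  fun f => forall I, is_ideal I -> (forall a, A a -> I a) -> I f.

Definition initial_ideal (le : rel mon) (J : S -> Prop) : S -> Prop :=
  ideal_gen (fun m => exists f, [/\ J f, f != 0 & m = 'X_[lm le f]]).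

Definition groebner_basis (le : rel mon) (J : S -> Prop) (G : seq S) : Prop :=
  (forall g, g \in G -> J g /\ g != 0) /\
  (forall f, initial_ideal le J f <->
             ideal_gen (fun m => exists2 g, g \in G & m = 'X_[lm le g]) f).

Definition S_nice (le : rel mon) (GJ : seq S) (E : S -> Prop) : Prop :=
  forall f g, f \in GJ -> E g -> g != 0 -> E (spoly le f g).

End GB.

(* Main.v *)
Require Import Defs.
From HB Require Import structures.
From mathcomp Require Import all_boot all_order all_algebra.
From mathcomp Require Import mpoly.
From Stdlib Require Import Classical.
Set Implicit Arguments. Unset Strict Implicit. Unset Printing Implicit Defensive.
Import GRing.Theory.

Definition sle (y x : seq nat) := forall i, nth 0 y i <= nth 0 x i.

Lemma witnesses (n : nat) (P : seq nat -> Prop) (t : seq (seq nat)) :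
  (forall x', x' \in t -> (exists a, P (a :: x')) /\ size x' = n) ->
  exists w : seq (nat * seq nat),
    (forall p, p \in w -> P (p.1 :: p.2) /\ size p.2 = n) /\
    (forall x', x' \in t -> exists a, (a, x') \in w).
Proof.
elim: t => [|x t IH] H.
  by exists [::]; split.
have [[a Pa] sz] := H x (mem_head _ _).
have [w [Hw1 Hw2]] : exists w : seq (nat * seq nat),
    (forall p, p \in w -> P (p.1 :: p.2) /\ size p.2 = n) /\
    (forall x', x' \in t -> exists a, (a, x') \in w).
  by apply: IH => x' hx; apply: H; rewrite in_cons hx orbT.
exists ((a, x) :: w); split.
  move=> p; rewrite in_cons => /orP [/eqP -> //|]; exact: Hw1.
move=> x'; rewrite in_cons => /orP [/eqP ->|/Hw2 [b hb]].
  by exists a; rewrite mem_head.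
by exists b; rewrite in_cons hb orbT.
Qed.

Lemma dickson (n : nat) : forall (P : seq nat -> Prop), exists s : seq (seq nat),
  (forall x, x \in s -> P x /\ size x = n) /\
  (forall x, P x -> size x = n -> exists2 y, y \in s & sle y x).
Proof.
elim: n => [|n IH] P.
  case: (classic (P [::])) => HP.
    exists [:: [::]]; split.
      by move=> x; rewrite mem_seq1 => /eqP ->.
    by move=> [|//] _ _; exists [::]; rewrite ?mem_head // => i.
  by exists [::]; split => // -[|//] /HP.
have [t [Ht1 Ht2]] := IH (fun x' => exists a, P (a :: x')).
have [w [Hw1 Hw2]] := witnesses Ht1.
set A := foldr maxn 0 (map fst w).
have leA : forall p, p \in w -> p.1 <= A.
  rewrite /A; elim: (w) => [//|q w' IHw] p; rewrite in_cons /= => /orP [/eqP ->|hp].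
    by rewrite leq_maxl.
  exact: leq_trans (IHw p hp) (leq_maxr _ _).
have [u [Hu1 Hu2]] : exists u : seq (seq nat),
    (forall x, x \in u -> P x /\ size x = n.+1) /\
    (forall i x', i < A -> P (i :: x') -> size x' = n ->
         exists2 y, y \in u & sle y (i :: x')).
  elim: (A) => [|B [u [Hu1 Hu2]]]; first by exists [::].
  have [s [Hs1 Hs2]] := IH (fun x' => P (B :: x')).
  exists (map (cons B) s ++ u); split.
    move=> x; rewrite mem_cat => /orP [/mapP [y hy ->]|/Hu1 //].
    by have [? ?] := Hs1 y hy; split => //=; congr S.
  move=> i x' hi Pi sz; rewrite ltnS leq_eqVlt in hi.
  case/orP: hi => [/eqP ei|hi].
    subst i; have [y hy ley] := Hs2 x' Pi sz.
    exists (B :: y); first by rewrite mem_cat map_f.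
    by case.
  have [y hy ley] := Hu2 i x' hi Pi sz.
  by exists y => //; rewrite mem_cat hy orbT.
exists (map (fun p => p.1 :: p.2) w ++ u); split.
  move=> x; rewrite mem_cat => /orP [/mapP [p hp ->]|/Hu1 //].
  by have [? ?] := Hw1 p hp; split => //=; congr S.
move=> [//|a x'] Px /= [sz].
case: (ltnP a A) => ha.
  have [y hy ley] := Hu2 a x' ha Px sz.
  by exists y => //; rewrite mem_cat hy orbT.
have [y' hy' ley'] := Ht2 x' (ex_intro _ a Px) sz.
have [b hb] := Hw2 y' hy'.
exists (b :: y'); first by rewrite mem_cat; apply/orP; left; apply/mapP; exists (b, y').
case=> [|i] /=; last exact: ley'.
exact: leq_trans (leA _ hb) ha.
Qed.

Section Main.
Variables (K : fieldType) (n : nat) (le : rel 'X_{1..n}).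
Local Notation S := {mpoly K[n]}.
Local Notation mon := 'X_{1..n}.
Local Open Scope ring_scope.

Lemma foldr_mem (x : mon) s : foldr (mon_max le) x s \in x :: s.
Proof.
elim: s => [|y s IH] /=; first exact: mem_head.
rewrite /mon_max; case: ifP => _; first by rewrite !in_cons eqxx orbT.
move: IH; rewrite !in_cons => /orP [->//|->]; by rewrite !orbT.
Qed.

Lemma lm_in (f : S) : f != 0 -> lm le f \in msupp f.
Proof.
rewrite -msupp_eq0 /lm; case: (msupp f) => [//|x s] _ /=.
exact: foldr_mem.
Qed.

Lemma idealN (E : S -> Prop) a : is_ideal E -> E a -> E (- a).
Proof. by case=> _ _ HM Ha; rewrite -mulN1r; apply: HM. Qed.

Definition gens (G : seq S) : S -> Prop :=
  fun m => exists2 g, g \in G & m = 'X_[lm le g].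

Lemma monideal (G : seq S) p : ideal_gen (gens G) p ->
  forall m, m \in msupp p -> exists2 g, g \in G & (lm le g <= m)%MM.
Proof.
move=> Hp; apply: (Hp (fun p => forall m, m \in msupp p ->
   exists2 g, g \in G & (lm le g <= m)%MM)).
  split.
  - by move=> m; rewrite msupp0.
  - move=> a b Ha Hb m /msuppD_le; rewrite mem_cat => /orP [/Ha|/Hb] //.
  - move=> r a Ha m /msuppM_le /allpairsP [[m1 m2] /= [_ h2 ->]].
    have [g hg leg] := Ha m2 h2; exists g => //.
    apply: lepm_trans leg _; apply/mnm_lepP => i; rewrite mnmDE; exact: leq_addl.
move=> a [g hg ->] m; rewrite msuppX mem_seq1 => /eqP ->.
by exists g => //; exact: lepm_refl.
Qed.

Lemma gb_div (E : S -> Prop) GE h : groebner_basis le E GE -> E h -> h != 0 ->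
  exists2 g, g \in GE & (lm le g <= lm le h)%MM.
Proof.
move=> [_ HG] Eh hnz.
have : initial_ideal le E 'X_[lm le h].
  by move=> I _ HI; apply: HI; exists h.
move/HG/monideal; apply; by rewrite msuppX mem_seq1.
Qed.

Lemma c_to_a (E : S -> Prop) GJ GE : is_ideal E -> groebner_basis le E GE ->
  (forall f g, f \in GJ -> g \in GE -> E (spoly le f g)) -> S_nice le GJ E.
Proof.
move=> HE GB Hc f h fin Eh hnz.
have [g gin leg] := gb_div GB Eh hnz.
have [_ HD HM] := HE.
have Eg : E g by case: GB => H _; case: (H g gin).
set c := (lc le f)^-1.
set A := (mlcm (lm le f) (lm le g) - lm le f)%MM.
set B := (mlcm (lm le f) (lm le h) - lm le f)%MM.
have T1 : E ((c *: 'X_[A]) * f).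
  have := HD _ _ (Hc f g fin gin)
    (HM ((lc le g)^-1 *: 'X_[(mlcm (lm le f) (lm le g) - lm le g)%MM]) _ Eg).
  by rewrite /spoly subrK.
have AB : (A <= B)%MM.
  apply/mnm_lepP => i; rewrite /A /B !mnmBE /mlcm !mnmE.
  have := mnm_lepP leg i; move=> hi.
  apply: leq_sub2r; rewrite geq_max leq_maxl /=.
  exact: leq_trans hi (leq_maxr _ _).
have T1h : E ((c *: 'X_[B]) * f).
  rewrite -(submK AB) mpolyXD scalerAr -mulrA.
  exact: HM.
rewrite /spoly -/c -/B; apply: HD => //; apply: idealN => //; exact: HM.
Qed.

Lemma gb_exists (E : S -> Prop) : is_ideal E -> exists GE, groebner_basis le E GE.
Proof.
move=> HE; have [_ HD HM] := HE.
pose P := fun x : seq nat => exists m : mon, (exists e, [/\ E e, e != 0 & m = lm le e])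
   /\ x = tval (multinom_val m).
have [s [Hs1 Hs2]] := dickson n P.
have [GE [HG1 HG2]] : exists GE : seq S, (forall g, g \in GE -> E g /\ g != 0) /\
    (forall y, y \in s -> exists2 g, g \in GE & y = tval (multinom_val (lm le g))).
  elim: (s) Hs1 => [|y s' IH] H; first by exists [::].
  have [[m [[e [Ee enz ->]] ->]] _] := H y (mem_head _ _).
  have [GE [HG1 HG2]] : exists GE : seq S, (forall g, g \in GE -> E g /\ g != 0) /\
    (forall y, y \in s' -> exists2 g, g \in GE & y = tval (multinom_val (lm le g))).
    by apply: IH => x hx; apply: H; rewrite in_cons hx orbT.
  exists (e :: GE); split.
    by move=> g; rewrite in_cons => /orP [/eqP ->|/HG1].
  move=> y'; rewrite in_cons => /orP [/eqP ->|/HG2 [g hg ->]].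
    by exists e; rewrite ?mem_head.
  by exists g; rewrite // in_cons hg orbT.
have cover : forall e, E e -> e != 0 -> exists2 g, g \in GE & (lm le g <= lm le e)%MM.
  move=> e Ee enz.
  have [y hy ley] := Hs2 (tval (multinom_val (lm le e)))
     (ex_intro _ (lm le e) (conj (ex_intro _ e (And3 Ee enz erefl)) erefl))
     (size_tuple _).
  have [g hg yE] := HG2 y hy; exists g => //.
  apply/mnm_lepP => i; rewrite !(mnm_nth 0); have := ley i; by rewrite yE.
exists GE; split => // f; split => Hf.
- move=> I HI Hgen; apply: Hf => // _ [e [Ee enz ->]].
  have [g hg leg] := cover e Ee enz.
  rewrite -(submK leg) mpolyXD; case: HI => _ _ HIM; apply: HIM.
  by apply: Hgen; exists g.
- move=> I HI Hgen; apply: Hf => // _ [g hg ->]; apply: Hgen.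
  by have [? ?] := HG1 g hg; exists g.
Qed.

End Main.

Theorem mainTheorem15 (K : fieldType) (n : nat) (le : rel 'X_{1..n})
    (J E : {mpoly K[n]} -> Prop) (GJ : seq {mpoly K[n]}) :
  monomial_order le -> is_ideal J -> is_ideal E -> groebner_basis le J GJ ->
  (S_nice le GJ E <->
     (forall GE, groebner_basis le E GE ->
        forall f g, f \in GJ -> g \in GE -> E (spoly le f g))) /\
  ((forall GE, groebner_basis le E GE ->
        forall f g, f \in GJ -> g \in GE -> E (spoly le f g)) <->
     (exists GE, groebner_basis le E GE /\
        forall f g, f \in GJ -> g \in GE -> E (spoly le f g))).
Proof.
move=> _ _ HE _.
have [G0 HG0] := gb_exists le HE.
have ab : S_nice le GJ E -> (forall GE, groebner_basis le E GE ->
        forall f g, f \in GJ -> g \in GE -> E (spoly le f g)).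
  move=> Ha GE [HG _] f g fin gin; have [? ?] := HG g gin; exact: Ha.
split; split.
- exact: ab.
- move=> Hb; exact: (c_to_a HE HG0 (Hb G0 HG0)).
- by move=> Hb; exists G0; split => //; apply: Hb.
- by move=> [GE [HG Hc]]; apply: ab; exact: (c_to_a HE HG Hc).
Qed.
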